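(* If $G$ is a partial cube, then $c(G) \geq \left\lceil \frac{\delta(G)}{2} \right\rceil$.
   Context: The $n$-dimensional hypercube $Q_n$ has vertex set $\{0,1\}^n$, two strings being adjacent iff they differ in exactly one position. An induced subgraph $H$ of a graph $G$ is isometric if $d_H(u,v) = d_G(u,v)$ for all $u,v \in V(H)$. A partial cube is a connected graph isomorphic to an isometric subgraph of some hypercube $Q_n$. $\delta(G)$ is the minimum degree of $G$. Cops and Robbers on a finite simple graph $G$: $k$ cops first choose starting vertices, then the robber chooses a starting vertex; thereafter in each round all cops move (each to a neighboring vertex or staying put), then the robber moves (to a neighbor or staying put); all positions are visible to both sides. The cops win if some cop occupies the robber's vertex at some point. The cop number $c(G)$ is the minimum $k$ such that $k$ cops have a strategy guaranteeing capture. *)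

(* Defs.v *)
From mathcomp Require Import all_boot.
Set Implicit Arguments. Unset Strict Implicit. Unset Printing Implicit Defensive.

Section Graphs.
Variable T : finType.
Variable e : rel T.

Definition simple_graph := symmetric e /\ irreflexive e.

Definition connected_graph := 0 < #|T| /\ forall u v : T, connect e u v.

Definition walk (u v : T) (k : nat) :=
  exists s : seq T, [/\ size s = k, path e u s & last u s = v].

Definition dist_is (u v : T) (k : nat) :=
  walk u v k /\ forall j, walk u v j -> k <= j.

Definition mindeg : nat := \big[minn/#|T|]_(v : T) #|[set w | e v w]|.
End Graphs.

(* Hypercube Q_n: vertices {0,1}^n, adjacency = differ in exactly one position;
   its graph distance is the Hamming distance. *)
Definition hamming n (a b : {ffun 'I_n -> bool}) : nat := #|[set i | a i != b i]|.
Definition hypercube_adj n (a b : {ffun 'I_n -> bool}) : bool := hamming a b == 1.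

(* Partial cube: connected graph isomorphic (via f) to an induced subgraph H of Q_n
   (f injective, adjacency in G iff adjacency in Q_n) which is isometric:
   d_H(f u, f v) (= d_G(u,v) by the isomorphism) equals d_{Q_n}(f u, f v) = Hamming. *)
Definition partial_cube (T : finType) (e : rel T) :=
  connected_graph e /\
  exists n (f : T -> {ffun 'I_n -> bool}),
    [/\ injective f,
        forall u v, e u v = hypercube_adj (f u) (f v)
      & forall u v, dist_is e u v (hamming (f u) (f v))].

Definition cconf (T : finType) (k : nat) := {ffun 'I_k -> T}.

(* A (history-dependent) cop strategy: initial placement and a move function
   from the history of states (cop configuration, robber position), oldest first,
   to the next cop configuration. *)
Record cop_strategy (T : finType) (k : nat) := CopStrategy {
  cs_start : cconf T k;
  cs_step : seq (cconf T k * T) -> cconf T k }.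

Definition legal_cop_strategy (T : finType) (e : rel T) k (s : cop_strategy T k) :=
  forall (h : seq (cconf T k * T)) (x : cconf T k * T) (i : 'I_k),
    cs_step s (rcons h x) i = x.1 i \/ e (x.1 i) (cs_step s (rcons h x) i).

Definition legal_robber (T : finType) (e : rel T) (r : nat -> T) :=
  forall t, r t.+1 = r t \/ e (r t) (r t.+1).

Fixpoint history (T : finType) k (s : cop_strategy T k) (r : nat -> T) (t : nat)
  : seq (cconf T k * T) :=
  match t with
  | 0 => [:: (cs_start s, r 0)]
  | t'.+1 => let h := history s r t' in rcons h (cs_step s h, r t)
  end.

Definition cops_at (T : finType) k (s : cop_strategy T k) (r : nat -> T) (t : nat)
  : cconf T k := (last (cs_start s, r 0) (history s r t)).1.

(* Capture: at some time a cop occupies the robber's vertex, either after the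
   robber's move (or initial placement) at time t, or after the cops' move
   in round t+1 (before the robber moves). *)
Definition captured (T : finType) k (s : cop_strategy T k) (r : nat -> T) :=
  exists t (i : 'I_k), cops_at s r t i = r t \/ cops_at s r t.+1 i = r t.

Definition cops_win (T : finType) (e : rel T) (k : nat) :=
  exists s : cop_strategy T k, legal_cop_strategy e s /\
    forall r : nat -> T, legal_robber e r -> captured s r.

(* Main.v *)
Require Import Defs.
From mathcomp Require Import all_boot.
From mathcomp Require Import zify.
Set Implicit Arguments. Unset Strict Implicit. Unset Printing Implicit Defensive.

Definition dif n (a b : {ffun 'I_n -> bool}) := [set i | a i != b i].

Lemma common_nb (T : finType) (e : rel T) n (f : T -> {ffun 'I_n -> bool}) :
  injective f -> (forall u v, e u v = hypercube_adj (f u) (f v)) ->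
  forall v c : T, c != v -> #|[set w | e v w && ((c == w) || e c w)]| <= 2.
Proof.
move=> finj fe v c cv.
have difinj : injective (fun w => dif (f v) (f w)).
  move=> w1 w2 H; apply: finj; apply/ffunP=> i.
  have : (i \in dif (f v) (f w1)) = (i \in dif (f v) (f w2)) by rewrite H.
  rewrite /dif !inE.
  by case: (f v i) (f w1 i) (f w2 i) => [] [] [].
set S := [set w | _].
set D := dif (f v) (f c).
have [d dD] : exists d, d \in D.
  case: (set_0Vmem D) => [D0|[d dD]]; last by exists d.
  exfalso; move/eqP: cv; apply; apply: finj; apply/ffunP=> i.
  have : i \notin D by rewrite D0 inE.
  by rewrite /D /dif inE negbK => /eqP.
have key : forall w, w \in S ->
    exists j, [/\ dif (f v) (f w) = [set j], j \in D & #|D| <= 2].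
  move=> w; rewrite inE => /andP[evw hcw].
  have /cards1P[j Hj] : #|dif (f v) (f w)| == 1.
    by move: evw; rewrite fe /hypercube_adj /hamming.
  have hcw1 : #|dif (f c) (f w)| <= 1.
    case/orP: hcw => [/eqP -> | ecw].
      rewrite (_ : dif (f w) (f w) = set0) ?cards0 //.
      by apply/setP=> i; rewrite !inE eqxx.
    by move: ecw; rewrite fe /hypercube_adj /hamming => /eqP ->.
  have xr : forall i, (i \in dif (f c) (f w)) = (i \in D) (+) (i \in dif (f v) (f w)).
    by move=> i; rewrite /D /dif !inE; case: (f v i) (f c i) (f w i) => [] [] [].
  have jD : j \in D.
    apply/negPn/negP => jD.
    have dj : d != j by apply: contraNneq jD => <-.
    have : [set j; d] \subset dif (f c) (f w).
      apply/subsetP => i /set2P[]->; rewrite xr Hj in_set1.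
        by rewrite eqxx (negbTE jD).
      by rewrite dD (negbTE dj).
    move/subset_leq_card; rewrite cards2 eq_sym dj => h.
    by have := leq_trans h hcw1.
  exists j; split => //.
  have : D \subset j |: dif (f c) (f w).
    apply/subsetP => i iD; rewrite in_setU1; case: eqP => //= /eqP ij.
    by rewrite xr iD Hj in_set1 (negbTE ij).
  move/subset_leq_card; rewrite cardsU1 => h; apply: leq_trans h _.
  by rewrite -(addn1 1); apply: leq_add => //; apply: leq_b1.
case: (set_0Vmem S) => [->|[w0 w0S]]; first by rewrite cards0.
have [j0 [_ _ D2]] := key w0 w0S.
rewrite -(card_imset S difinj); apply: leq_trans D2.
apply: leq_trans (leq_imset_card (fun j => [set j]) D).
apply: subset_leq_card; apply/subsetP => A /imsetP[w wS ->].
have [j [-> jD _]] := key w wS.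
by apply: imset_f.
Qed.

Lemma card_bigcup_ord (T : finType) k (F : 'I_k -> {set T}) :
  #|\bigcup_(i < k) F i| <= \sum_(i < k) #|F i|.
Proof.
apply: (big_rec2 (fun (A : {set T}) m => #|A| <= m)); first by rewrite cards0.
move=> i A m _ h; apply: leq_trans (leq_card_setU _ A) _.
by rewrite leq_add2l.
Qed.

Definition safe (T : finType) (e : rel T) k (C : cconf T k) (w : T) :=
  [forall i, (C i != w) && ~~ e (C i) w].

Lemma escape (T : finType) (e : rel T) n (f : T -> {ffun 'I_n -> bool}) :
  injective f -> (forall u v, e u v = hypercube_adj (f u) (f v)) ->
  forall k (C : cconf T k) v, (forall i, C i != v) ->
  2 * k < #|[set w | e v w]| -> exists w, e v w && safe e C w.
Proof.
move=> finj fe k C v Cv hk.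
case: (pickP (fun w => e v w && safe e C w)) => [w hw|none]; first by exists w.
exfalso.
have sub : [set w | e v w] \subset
    \bigcup_(i < k) [set w | e v w && ((C i == w) || e (C i) w)].
  apply/subsetP => w; rewrite inE => evw; move: (none w).
  rewrite /= evw /= /safe => /negbT; rewrite negb_forall => /existsP[i].
  rewrite negb_and !negbK => hi; apply/bigcupP; exists i => //.
  by rewrite inE evw.
have := leq_trans (subset_leq_card sub) (card_bigcup_ord _).
move=> h.
have h2 : \sum_(i < k) #|[set w | e v w && ((C i == w) || e (C i) w)]| <= \sum_(i < k) 2.
  by apply: leq_sum => i _; apply: (common_nb finj fe).
have := leq_trans h h2; rewrite sum_nat_const card_ord mulnC => h3.
by have := leq_ltn_trans h3 hk; rewrite ltnn.
Qed.

Definition choose_mv (T : finType) (e : rel T) k (C : cconf T k) (x : T) :=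
  odflt x [pick w | e x w && safe e C w].

Fixpoint rob (T : finType) (e : rel T) k (s : cop_strategy T k) (r0 : T) (t : nat)
  : T * seq (cconf T k * T) :=
  match t with
  | 0 => (r0, [:: (cs_start s, r0)])
  | t'.+1 => let p := rob e s r0 t' in
     let x := choose_mv e (cs_step s p.2) p.1 in
     (x, rcons p.2 (cs_step s p.2, x))
  end.

Definition robr (T : finType) (e : rel T) k (s : cop_strategy T k) r0 t :=
  (rob e s r0 t).1.

Lemma hist_rob (T : finType) (e : rel T) k (s : cop_strategy T k) r0 t :
  history s (robr e s r0) t = (rob e s r0 t).2.
Proof. by elim: t => [|t IH] //=; rewrite IH. Qed.

Lemma cops_S (T : finType) k (s : cop_strategy T k) r t :
  cops_at s r t.+1 = cs_step s (history s r t).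
Proof. by rewrite /cops_at /= last_rcons. Qed.

Lemma hist_rcons (T : finType) k (s : cop_strategy T k) r t :
  exists h x, history s r t = rcons h x /\ cops_at s r t = x.1.
Proof.
case: t => [|t]; first by exists [::], (cs_start s, r 0).
exists (history s r t), (cs_step s (history s r t), r t.+1).
by rewrite /cops_at /= last_rcons.
Qed.

Lemma cop_move (T : finType) (e : rel T) k (s : cop_strategy T k) r t i :
  legal_cop_strategy e s ->
  cops_at s r t.+1 i = cops_at s r t i \/ e (cops_at s r t i) (cops_at s r t.+1 i).
Proof.
move=> leg; have [h [x [Hh Hc]]] := hist_rcons s r t.
by rewrite cops_S Hh Hc; apply: leg.
Qed.

Lemma robr_S (T : finType) (e : rel T) k (s : cop_strategy T k) r0 t :
  robr e s r0 t.+1 = choose_mv e (cops_at s (robr e s r0) t.+1) (robr e s r0 t).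
Proof. by rewrite cops_S hist_rob. Qed.

Lemma bigmin_le (I : finType) x (F : I -> nat) v : \big[minn/x]_(i : I) F i <= F v.
Proof.
have : v \in index_enum I by rewrite mem_index_enum.
elim: (index_enum I) => [//|a l IH]; rewrite in_cons big_cons /=.
case/orP => [/eqP->|/IH h]; first exact: geq_minl.
exact: leq_trans (geq_minr _ _) h.
Qed.

Theorem theorem3p2 (T : finType) (e : rel T) :
  simple_graph e -> partial_cube e ->
  forall k : nat, cops_win e k -> uphalf (mindeg e) <= k.
Proof.
move=> [esym eirr] [[T0 _] [n [f [finj fe _]]]] k [s [legal win]].
rewrite leqNgt; apply/negP => hk.
have hk2 : 2 * k < mindeg e.
  have := odd_double_half (mindeg e); move: hk; rewrite uphalf_half -muln2.
  case: odd => /=; lia.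
have deg : forall v, 2 * k < #|[set w | e v w]|.
  move=> v; apply: leq_trans hk2 _.
  exact: bigmin_le.
have esc := escape finj fe.
case/card_gt0P: T0 => x0 _.
have [v0 v0C] : exists v0, forall i, cs_start s i != v0.
  case: (pickP (fun v => v \notin [set cs_start s i | i : 'I_k])) => [v hv|none].
    exists v => i; apply: contraNneq hv => <-; exact: imset_f.
  exfalso.
  have : [set: T] \subset [set cs_start s i | i : 'I_k].
    by apply/subsetP => v _; move: (none v) => /= /negbFE.
  move/subset_leq_card; rewrite cardsT.
  have := leq_imset_card (cs_start s) 'I_k; rewrite card_ord => h1 h2.
  have h3 : #|[set w | e x0 w]| <= #|T|.-1.
    rewrite -(cardsC1 x0); apply: subset_leq_card; apply/subsetP => w; rewrite !inE.
    by apply: contraTneq => ->; rewrite eirr.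
  have h12 : #|T| <= k := leq_trans h2 h1. have := deg x0. lia.
pose r0 := odflt x0 [pick w | safe e (cs_start s) w].
pose r := robr e s r0.
have inv : forall t, safe e (cops_at s r t) (r t).
  elim => [|t IH].
    rewrite /r /robr /= /r0 /cops_at /=.
    case: pickP => [w //|none]; exfalso.
    have [w /andP[_ hw]] := esc k (cs_start s) v0 v0C (deg v0).
    by move: (none w); rewrite hw.
  have nc : forall i, cops_at s r t.+1 i != r t.
    move=> i; move: IH => /forallP/(_ i)/andP[h1 h2].
    case: (@cop_move _ e _ s r t i legal) => [->|hh]; first by [].
    by apply: (contraTneq _ hh) => ->.
  rewrite /r robr_S -/r /choose_mv.
  case: pickP => [w /andP[_ //]|none]; exfalso.
  have [w hw] := esc k (cops_at s r t.+1) (r t) nc (deg (r t)).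
  by move: (none w); rewrite hw.
have rleg : legal_robber e r.
  move=> t; rewrite /r robr_S -/r /choose_mv.
  case: pickP => [w /andP[h _]|_] /=; [by right | by left].
have [t [i H]] := win r rleg.
move: (inv t) => /forallP/(_ i)/andP[h1 h2].
case: H => [/eqP|H]; first by rewrite (negbTE h1).
case: (@cop_move _ e _ s r t i legal); rewrite H => h.
  by move: h1; rewrite h eqxx.
by move: h2; rewrite h.
Qed.
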